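(* Let $R$ be a commutative unital ring, $G$ a group and $(\mathcal B_1,\Phi_1)\subseteq(\mathcal B_2,\Phi_2)$ a partial subaction of $G$ on generalized Boolean algebras with $\Phi_k=(\{\mathcal I_{k,t}\},\{\phi_{k,t}\})$, and let $A_k=\mathrm{Lc}(R,\mathcal B_k)\rtimes_{\Phi_k}G$, with $A_1\subseteq A_2$. Suppose $\mathcal B_1$ is an ideal of $\mathcal B_2$, and suppose $C_1$ is a cover of $\mathcal B_1$ and, for each $g\in G$, $C_g$ is a cover of $\mathcal I_{2,g}$, such that for all $g\in G$, $X,Y\in C_1$ and $V\in C_{g^{-1}}$ there exists $Z\in\mathcal I_{1,g}$ with $X\cap\phi_{2,g}(Y\cap V)\le Z$. Then for every $U\in\mathcal B_1$, $(U\delta_e)A_1(U\delta_e)=(U\delta_e)A_2(U\delta_e)$.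
   Context: A generalized Boolean algebra is a distributive relatively complemented lattice with least element $0$; an ideal is a subset closed under finite joins and under meets with arbitrary elements; a cover of $\mathcal B$ (or of an ideal $\mathcal I$) is a subset $C$ such that every element is $\le$ a finite join of elements of $C$. A partial action $\Phi$ of $G$ on $\mathcal B$: ideals $\mathcal I_t$ and isomorphisms $\phi_t:\mathcal I_{t^{-1}}\to\mathcal I_t$ with $\mathcal I_e=\mathcal B$, $\phi_e=\mathrm{id}$, $\phi_s(\mathcal I_{s^{-1}}\cap\mathcal I_t)=\mathcal I_s\cap\mathcal I_{st}$, $\phi_s\phi_t=\phi_{st}$ where defined. A partial subaction: $\mathcal B_1\subseteq\mathcal B_2$ sub generalized Boolean algebra, $\mathcal I_{1,t}\subseteq\mathcal I_{2,t}$, $\phi_{2,t}$ restricting to $\phi_{1,t}$. $\mathrm{Lc}(R,\mathcal B)$ is the algebra of locally constant compactly supported $R$-valued functions on the Stone space of $\mathcal B$, spanned by idempotents $1_U$; $\mathrm{Lc}(R,\mathcal B)\rtimes_\Phi G=\bigoplus_g\mathrm{Lc}(R,\mathcal I_g)\delta_g$ with $U\delta_g:=1_U\delta_g$ and $(U\delta_g)(V\delta_h)=\phi_g(\phi_{g^{-1}}(U)\cap V)\delta_{gh}$. $A_1$ is identified with the $R$-span of $\{U\delta_g:U\in\mathcal I_{1,g}\}$ in $A_2$. *)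

(* Defs.v *)
From HB Require Import structures.
From mathcomp Require Import all_boot all_order all_algebra.
From mathcomp Require Import monoid.
Set Implicit Arguments. Unset Strict Implicit. Unset Printing Implicit Defensive.
Import Order.TTheory GRing.Theory.

(* Generalized Boolean algebras are modelled by MathComp's
   cbDistrLatticeType: distributive lattices with bottom and relative
   (sectional) complements.  The ambient algebra B2 is the whole type T;
   sub generalized Boolean algebras, ideals and covers are predicates on T. *)

Section GBA.
Local Open Scope order_scope.
Context {disp : Order.disp_t} {T : cbDistrLatticeType disp}.

Definition sub_gba (S : pred T) : Prop :=
  [/\ S \bot, (forall x y, S x -> S y -> S (x `|` y)),
      (forall x y, S x -> S y -> S (x `&` y))
    & (forall x y, S x -> S y -> S (x `\` y))].

Definition ideal_in (S I : pred T) : Prop :=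
  [/\ {subset I <= S}, I \bot, (forall x y, I x -> I y -> I (x `|` y))
    & (forall x y, I x -> S y -> I (x `&` y))].

Definition iso_on (I J : pred T) (f : T -> T) : Prop :=
  [/\ (forall x, I x -> J (f x)),
      (forall x y, I x -> I y -> f x = f y -> x = y),
      (forall y, J y -> exists2 x, I x & f x = y),
      (forall x y, I x -> I y -> f (x `&` y) = f x `&` f y)
    & (forall x y, I x -> I y -> f (x `|` y) = f x `|` f y)].

Record partial_action (G : groupType) (S : pred T) (I : G -> pred T)
    (phi : G -> T -> T) : Prop := PartialAction {
  pa_ideal : forall t, ideal_in S (I t);
  pa_iso : forall t, iso_on (I (t^-1)%g) (I t) (phi t);
  pa_unit_dom : forall x, I 1%g x = S x;
  pa_unit : forall x, S x -> phi 1%g x = x;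
  pa_dom : forall s t y,
    (I s y /\ I (s * t)%g y) <->
    (exists2 x, I (s^-1)%g x /\ I t x & phi s x = y);
  pa_comp : forall s t x, I (t^-1)%g x -> I (s^-1)%g (phi t x) ->
    phi s (phi t x) = phi (s * t)%g x
}.

(* (B1, (I1, phi1)) is a partial subaction of (T, (I2, phi2)); the maps
   phi1 t are the restrictions of phi2 t, so we use phi2 for both *)
Definition partial_subaction (G : groupType) (B1 : pred T)
    (I1 I2 : G -> pred T) (phi2 : G -> T -> T) : Prop :=
  [/\ sub_gba B1, partial_action predT I2 phi2, partial_action B1 I1 phi2
    & (forall t x, I1 t x -> I2 t x)].

Definition is_cover (S C : pred T) : Prop :=
  {subset C <= S} /\
  forall x, S x -> exists2 s : seq T, all C s & x <= \join_(y <- s) y.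

(* The Stone space of T: prime filters of T *)
Definition prime_filter (xi : T -> bool) : Prop :=
  [/\ (exists x, xi x), ~~ xi \bot,
      (forall x y, xi x -> x <= y -> xi y),
      (forall x y, xi x -> xi y -> xi (x `&` y))
    & (forall x y, xi (x `|` y) -> xi x || xi y)].

Definition stone := {xi : T -> bool | prime_filter xi}.

End GBA.

Section Crossed.
Local Open Scope ring_scope.
Context {disp : Order.disp_t} {T : cbDistrLatticeType disp}.
Context (R : comNzRingType) (G : groupType) (phi : G -> T -> T).

(* formal R-linear combinations of generators  r (V delta_g)  are lists of
   triples (r, V, g) *)
Definition gterm := (R * T * G)%type.

(* (r V delta_g)(s W delta_h) = rs phi_g(phi_{g^-1}(V) /\ W) delta_{gh} *)
Definition gmul (a b : gterm) : gterm :=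
  (a.1.1 * b.1.1, phi a.2 (Order.meet (phi (a.2^-1)%g a.1.2) b.1.2),
   (a.2 * b.2)%g).

Definition smul (l1 l2 : seq gterm) : seq gterm :=
  [seq gmul a b | a <- l1, b <- l2].

(* the element of  Lc(R,T) x| G = (+)_g Lc(R, I_g) delta_g  represented by a
   formal combination: its g-component is the locally compact function on the
   Stone space xi |-> sum of r * 1_V(xi) over terms (r,V,g) *)
Definition geval (l : seq gterm) : G -> @stone _ T -> R :=
  fun g xi => \sum_(a <- l | a.2 == g) a.1.1 * ((proj1_sig xi) a.1.2)%:R.

(* the R-span A_I of { V delta_g : V in I g } *)
Definition in_span (I : G -> pred T) (l : seq gterm) : bool :=
  all (fun a => I a.2 a.1.2) l.

Definition corner (I : G -> pred T) (U : T) : (G -> @stone _ T -> R) -> Prop :=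
  fun f => exists2 l : seq gterm, in_span I l &
    f = geval (smul (smul [:: (1%R, U, 1%g)] l) [:: (1%R, U, 1%g)]).

End Crossed.

(* Main.v *)
Require Import Defs.
From HB Require Import structures.
From mathcomp Require Import all_boot all_order all_algebra.
From mathcomp Require Import monoid.
From Stdlib Require Import FunctionalExtensionality PropExtensionality.
Import Order.TTheory GRing.Theory.
Local Open Scope order_scope.

Section Aux.
Context {disp : Order.disp_t} {T : cbDistrLatticeType disp}.

Lemma big_join_ind (P : T -> Prop) (I : eqType) (s : seq I) (F : I -> T) :
  P \bot -> (forall x y, P x -> P y -> P (x `|` y)) ->
  (forall i, i \in s -> P (F i)) -> P (\join_(i <- s) F i).
Proof.
  move=> P0 PU; elim: s => [|a s IH] H; first by rewrite big_nil.
  rewrite big_cons; apply: PU; first by apply: (H a); rewrite inE eqxx.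
  by apply: IH => i Hi; apply: H; rewrite inE Hi orbT.
Qed.

Lemma meet_bigjoin (I : eqType) (s : seq I) (F : I -> T) x :
  x `&` \join_(i <- s) F i = \join_(i <- s) (x `&` F i).
Proof.
  elim: s => [|a s IH]; first by rewrite !big_nil meetx0.
  by rewrite !big_cons meetUr IH.
Qed.

Context {G : groupType} {I2 : G -> pred T} {phi : G -> T -> T}.
Hypothesis HA : partial_action predT I2 phi.

Lemma phi1 x : phi 1%g x = x.
Proof. exact: (pa_unit HA). Qed.

Lemma I2meet t x y : I2 t x -> I2 t (x `&` y).
Proof. by case: (pa_ideal HA t) => _ _ _ H; move=> Hx; apply: H. Qed.

Lemma I2bot t : I2 t \bot.
Proof. by case: (pa_ideal HA t). Qed.

Lemma I2join t x y : I2 t x -> I2 t y -> I2 t (x `|` y).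
Proof. by case: (pa_ideal HA t) => _ _ H _; apply: H. Qed.

Lemma I2phi t x : I2 (t^-1)%g x -> I2 t (phi t x).
Proof. by case: (pa_iso HA t) => H _ _ _ _; apply: H. Qed.

Lemma phiI t x y : I2 (t^-1)%g x -> I2 (t^-1)%g y -> phi t (x `&` y) = phi t x `&` phi t y.
Proof. by case: (pa_iso HA t) => _ _ _ H _; apply: H. Qed.

Lemma phiU t x y : I2 (t^-1)%g x -> I2 (t^-1)%g y -> phi t (x `|` y) = phi t x `|` phi t y.
Proof. by case: (pa_iso HA t) => _ _ _ _ H; apply: H. Qed.

Lemma phi_mono t x y : I2 (t^-1)%g x -> I2 (t^-1)%g y -> x <= y -> phi t x <= phi t y.
Proof.
  move=> Hx Hy /meet_idPl <-; rewrite phiI //; exact: leIr.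
Qed.

Lemma phi0 t : phi t \bot = \bot.
Proof.
  case: (pa_iso HA t) => _ _ Hs _ _.
  have [x Hx Ex] := Hs _ (I2bot t).
  by rewrite -{1}(meet0x x) phiI // ?I2bot // Ex meetx0.
Qed.

Lemma I2_bigjoin t (I : eqType) (s : seq I) (F : I -> T) :
  (forall i, i \in s -> I2 t (F i)) -> I2 t (\join_(i <- s) F i).
Proof.
  elim: s => [|a s IH] H; first by rewrite big_nil I2bot.
  rewrite big_cons; apply: I2join; first by apply: (H a); rewrite inE eqxx.
  by apply: IH => i Hi; apply: (H i); rewrite inE Hi orbT.
Qed.

Lemma phi_bigjoin t (I : eqType) (s : seq I) (F : I -> T) :
  (forall i, i \in s -> I2 (t^-1)%g (F i)) ->
  phi t (\join_(i <- s) F i) = \join_(i <- s) phi t (F i).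
Proof.
  elim: s => [|a s IH] H; first by rewrite !big_nil phi0.
  rewrite !big_cons phiU; first (rewrite IH //; move=> i Hi; apply: (H i); by rewrite inE Hi orbT).
  - by apply: (H a); rewrite inE eqxx.
  - by apply: I2_bigjoin => i Hi; apply: (H i); rewrite inE Hi orbT.
Qed.

Lemma phiK g x : I2 g x -> phi g (phi (g^-1)%g x) = x.
Proof.
  move=> Hx.
  have H1 : I2 ((g^-1)^-1)%g x by rewrite invgK.
  have H2 : I2 (g^-1)%g (phi (g^-1)%g x) by apply: I2phi.
  by rewrite (pa_comp HA H1 H2) mulgV phi1.
Qed.

End Aux.

Theorem theorem4p7 (R : comNzRingType) (G : groupType)
  (disp : Order.disp_t) (T : cbDistrLatticeType disp)
  (B1 : pred T) (I1 I2 : G -> pred T) (phi2 : G -> T -> T)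
  (Hsub : partial_subaction B1 I1 I2 phi2)
  (Hideal : ideal_in predT B1)
  (C1 : pred T) (C : G -> pred T)
  (HC1 : is_cover B1 C1)
  (HC : forall g, is_cover (I2 g) (C g))
  (Hcov : forall (g : G) (X Y V : T), C1 X -> C1 Y -> C (g^-1)%g V ->
     exists2 Z, I1 g Z & X `&` phi2 g (Y `&` V) <= Z) :
  forall U : T, B1 U -> @corner _ T R G phi2 I1 U = @corner _ T R G phi2 I2 U.
Proof.
  move=> U HU.
  case: Hsub => _ HA HA1 Hsub12.
  set u : @gterm _ T R G := (1%R, U, 1%g).
  pose f a := gmul phi2 (gmul phi2 u a) u.
  have smulE l : smul phi2 (smul phi2 [:: u] l) [:: u] = map f l.
    rewrite /smul /= cats0; elim: l => [|a l IH] //=.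
    by rewrite IH.
  have fE (a : @gterm _ T R G) : f a = (a.1.1, phi2 a.2 (phi2 (a.2^-1)%g (U `&` a.1.2) `&` U), a.2).
    case: a => [[r V] g]; rewrite /f /gmul /=.
    by rewrite invg1 !(phi1 HA) // mul1g mulg1 GRing.mul1r GRing.mulr1.
  have key g V : I2 g V ->
      let W := phi2 g (phi2 (g^-1)%g (U `&` V) `&` U) in
      [/\ I1 g W, W <= U & phi2 g (phi2 (g^-1)%g (U `&` W) `&` U) = W].
    move=> HV W.
    have HUV : I2 g (U `&` V) by rewrite meetC; apply: (I2meet HA).
    have HY0 : I2 (g^-1)%g (phi2 (g^-1)%g (U `&` V)).
      by apply: (I2phi HA); rewrite invgK.
    set Y := phi2 (g^-1)%g (U `&` V) `&` U.
    have HY : I2 (g^-1)%g Y by apply: (I2meet HA).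
    have WU : W <= U.
      apply: (le_trans _ (leIl U V)).
      rewrite /W -{2}(phiK HA g _ HUV); apply: (phi_mono HA) => //; exact: leIl.
    have YU : Y <= U by exact: leIr.
    have WW : phi2 g (phi2 (g^-1)%g (U `&` W) `&` U) = W.
      have -> : U `&` W = W by apply/meet_idPr.
      have E : phi2 (g^-1)%g W = Y.
        have H2 : I2 ((g^-1)^-1)%g (phi2 g Y) by rewrite invgK; apply: (I2phi HA).
        by rewrite /W (pa_comp HA HY H2) mulVg (phi1 HA).
      rewrite E.
      by have -> : Y `&` U = Y by apply/meet_idPl.
    split => //.
    case: HC1 => sC1 cC1; case: (HC (g^-1)%g) => sC cC.
    have [s1 Hs1 Us1] := cC1 U HU.
    have [s2 Hs2 Ys2] := cC Y HY.
    pose D t := exists2 Z, I1 g Z & t <= Z.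
    case: (pa_ideal HA1 g) => I1sub I1bot I1join I1meet.
    have D0 : D \bot by exists \bot => //.
    have DU x y : D x -> D y -> D (x `|` y).
      move=> [Z1 H1 L1] [Z2 H2 L2]; exists (Z1 `|` Z2); first exact: I1join.
      by rewrite leUx (le_trans L1 (leUl _ _)) (le_trans L2 (leUr _ _)).
    have Dle x y : x <= y -> D y -> D x.
      by move=> L [Z H1 L1]; exists Z => //; exact: le_trans L L1.
    pose J := \join_(x <- s1) \join_(v <- s2) (x `&` v).
    have Hxv x v : v \in s2 -> I2 (g^-1)%g (x `&` v).
      move=> Hv; rewrite meetC; apply: (I2meet HA); apply: sC; exact: (allP Hs2).
    have HJ : I2 (g^-1)%g J.
      apply: (I2_bigjoin HA) => x _.
      apply: (I2_bigjoin HA) => v Hv.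
      exact: Hxv.
    have YJ : Y <= J.
      have : Y <= (\join_(x <- s1) x) `&` (\join_(v <- s2) v).
        by rewrite lexI Ys2 (le_trans YU Us1).
      by rewrite meetC meet_bigjoin /J; under eq_bigr do rewrite meetC meet_bigjoin.
    have WJ : W <= phi2 g J by apply: (phi_mono HA).
    have EJ : phi2 g J = \join_(x <- s1) \join_(v <- s2) phi2 g (x `&` v).
      rewrite /J (phi_bigjoin HA) //; last first.
        move=> x _; apply: (I2_bigjoin HA) => v Hv.
        exact: Hxv.
      apply: eq_big_seq => x _; rewrite (phi_bigjoin HA) // => v Hv; exact: Hxv.
    have DX X : X \in s1 -> D (X `&` W).
      move=> HX; apply: (Dle _ (X `&` phi2 g J)).
        by rewrite lexI leIl (le_trans (leIr _ _) WJ).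
      rewrite EJ meet_bigjoin; apply: (@big_join_ind _ _ D) => // x Hx.
      rewrite meet_bigjoin; apply: (@big_join_ind _ _ D) => // v Hv.
      apply: Hcov; [exact: (allP Hs1) | exact: (allP Hs1) | exact: (allP Hs2)].
    have DW : D W.
      apply: (Dle _ ((\join_(x <- s1) x) `&` W)).
        by rewrite lexI lexx (le_trans WU Us1).
      rewrite meetC meet_bigjoin; apply: (@big_join_ind _ _ D) => // x Hx.
      by rewrite meetC; apply: DX.
    case: DW => Z HZ WZ.
    have BW : B1 W.
      case: Hideal => _ _ _ H.
      by have := H U W HU isT; have -> : U `&` W = W by apply/meet_idPr.
    have := I1meet Z W HZ BW.
    by have -> : Z `&` W = W by apply/meet_idPr.
  apply: functional_extensionality => F; apply: propositional_extensionality; split.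
  - case=> l Hl ->; exists l => //.
    by apply/allP => a Ha; apply: Hsub12; exact: (allP Hl).
  - case=> l Hl ->; exists (map f l).
      apply/allP => _ /mapP [a Ha ->]; rewrite fE /=.
      by case: (key _ _ (allP Hl a Ha)).
    rewrite !smulE -map_comp; congr geval; apply/eq_in_map => a Ha /=; symmetry.
    rewrite (fE (f a)) fE /=.
    by case: (key _ _ (allP Hl a Ha)) => _ _ ->.
Qed.
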